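(* Let $n\ge2$ and let $\varphi$ be a skew morphism of $\mathbb{Z}_n$ with odd complexity and auto-order $m$. Then $\varphi$ is uniquely determined by the triple $(\varphi(1),\varphi',\varphi^m)$: if $\psi$ is any skew morphism of $\mathbb{Z}_n$ with odd complexity such that $\psi(1)=\varphi(1)$, $\psi'=\varphi'$ and $\psi^m=\varphi^m$, then $\psi=\varphi$.
   Context: $\mathbb{Z}_n$ is the cyclic group of integers modulo $n$. A skew morphism of a finite group $G$ is a permutation $\varphi$ of $G$ fixing the identity such that for each $a\in G$ there is a non-negative integer $i_a$ with $\varphi(ab)=\varphi(a)\varphi^{i_a}(b)$ for all $b\in G$. ${\rm ord}(\varphi)$ is the order of $\langle\varphi\rangle$. If $\varphi$ is non-trivial, $\pi_\varphi(a)$ is the unique such $i_a\in\{1,\dots,{\rm ord}(\varphi)-1\}$; if $\varphi$ is the identity, $\pi_\varphi(a)=1$. Let $\sigma_\varphi(x,y)=\sum_{i=0}^{x-1}\pi_\varphi(\varphi^i(y))\in\mathbb{Z}_{{\rm ord}(\varphi)}$. The derived skew morphism $\varphi'$ of a skew morphism $\varphi$ of $\mathbb{Z}_n$ is the skew morphism of $\mathbb{Z}_{{\rm ord}(\varphi)}$ given by $\varphi'(a)=\sigma_\varphi(a,1)$. Set $\varphi^{(0)}=\varphi$, $\varphi^{(i+1)}=(\varphi^{(i)})'$. For $n\ge 2$ the complexity of $\varphi$ is the unique non-negative integer $c$ such that $\varphi^{(c)}$ is a skew morphism of a non-trivial cyclic group $\mathbb{Z}_m$ and $\varphi^{(c+1)}$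 is a skew morphism of $\mathbb{Z}_1$; $m$ is the auto-order of $\varphi$. *)

(* Defs.v *)
(* Z_n is modelled as {0,...,n-1} inside nat, with addition mod n;
   a map of Z_n is a function nat -> nat, only its values on [0,n) matter. *)
From mathcomp Require Import all_boot.
Set Implicit Arguments. Unset Strict Implicit. Unset Printing Implicit Defensive.

Definition is_skew_morphism (n : nat) (f : nat -> nat) : Prop :=
  [/\ forall x, x < n -> f x < n,
      {in [pred x | x < n] &, injective f},
      f 0 = 0 &
      forall a, a < n -> exists i : nat,
        forall b, b < n -> f ((a + b) %% n) = (f a + iter i f b) %% n].

(* ord(phi): the least k >= 1 with phi^k = id on Z_n.  For a permutation of an
   n-element set this k divides n!, so the bounded search is exact. *)
Definition sk_ord (n : nat) (f : nat -> nat) : nat :=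
  head 0 [seq k <- iota 1 (n`!) | [forall x : 'I_n, iter k f x == x]].

(* power function pi_phi(a): the unique i in {1..ord-1} (least one taken),
   or 1 if phi is the identity (ord = 1). *)
Definition sk_pi (n : nat) (f : nat -> nat) (a : nat) : nat :=
  if sk_ord n f == 1 then 1 else
  head 0 [seq i <- iota 1 (sk_ord n f).-1 |
          [forall b : 'I_n, f ((a + b) %% n) == (f a + iter i f b) %% n]].

Definition sk_sigma (n : nat) (f : nat -> nat) (x y : nat) : nat :=
  (\sum_(i < x) sk_pi n f (iter i f y)) %% sk_ord n f.

Definition sk_derived (n : nat) (f : nat -> nat) : nat -> nat :=
  fun a => sk_sigma n f a (1 %% n).

(* k-th derived: pair (phi^(k), modulus of its cyclic group) *)
Fixpoint sk_chain (k : nat) (n : nat) (f : nat -> nat) : (nat -> nat) * nat :=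
  match k with
  | 0 => (f, n)
  | k'.+1 => let p := sk_chain k' n f in (sk_derived p.2 p.1, sk_ord p.2 p.1)
  end.

Definition sk_complexity (n : nat) (f : nat -> nat) (c : nat) : Prop :=
  2 <= (sk_chain c n f).2 /\ (sk_chain c.+1 n f).2 = 1.

Definition sk_auto_order (n : nat) (f : nat -> nat) (c : nat) : nat :=
  (sk_chain c n f).2.

(* Main.v *)
Require Import Defs.
From mathcomp Require Import all_boot all_fingroup all_solvable.
From mathcomp Require Import zify.
Set Implicit Arguments. Unset Strict Implicit. Unset Printing Implicit Defensive.
Set Default Proof Using "All".

Lemma head_filter_iota (P : pred nat) a l k :
  a <= k -> k < a + l -> P k ->
  let h := head 0 [seq i <- iota a l | P i] in [/\ a <= h, h <= k & P h].
Proof.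
elim: l a => [|l IH] a /= Hak Hk Pk; first by lia.
case Pa: (P a) => /=; first by split.
have Hak' : a.+1 <= k.
  rewrite ltn_neqAle Hak andbT; apply/eqP=> E; by rewrite E Pk in Pa.
have [h1 h2 h3] := IH a.+1 Hak' ltac:(lia) Pk.
split => //; lia.
Qed.

Section Skew.
Variables (N : nat) (f : nat -> nat).
Hypothesis HN : 0 < N.
Hypothesis Hf : is_skew_morphism N f.

Lemma f_lt x : x < N -> f x < N.
Proof. by case: Hf => H _ _ _; apply: H. Qed.

Lemma iter_lt k x : x < N -> iter k f x < N.
Proof. move=> Hx; elim: k => [|k IH] //=; exact: f_lt. Qed.

Lemma f_inj x y : x < N -> y < N -> f x = f y -> x = y.
Proof. by case: Hf => _ H _ _ Hx Hy; apply: H. Qed.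

Lemma iter_inj k x y : x < N -> y < N -> iter k f x = iter k f y -> x = y.
Proof.
move=> Hx Hy; elim: k => [|k IH] //= E.
by apply: IH; apply: f_inj => //; apply: iter_lt.
Qed.

Lemma f0 : f 0 = 0.
Proof. by case: Hf. Qed.

Lemma iter0 k : iter k f 0 = 0.
Proof. by elim: k => //= k ->; rewrite f0. Qed.

Lemma exists_fact : forall x, x < N -> iter N`! f x = x.
Proof.
pose g (x : 'I_N) : 'I_N := Ordinal (f_lt (ltn_ord x)).
have ginj : injective g.
  move=> x y /(congr1 val) /= E; apply: val_inj; exact: (f_inj (ltn_ord x) (ltn_ord y) E).
pose p := perm ginj.
have Hp : (p ^+ N`!)%g = 1%g.
  have := @expg_cardG _ [set: {perm 'I_N}] p (in_setT p).
  by rewrite cardsT card_Sn.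
have Hit : forall k (x : 'I_N), val (iter k p x) = iter k f (val x).
  move=> k x; elim: k => [|k IH] //=; by rewrite permE /= IH.
move=> x Hx; have := Hit N`! (Ordinal Hx); rewrite -permX Hp perm1 /= => <- //.
Qed.

Definition skR := sk_ord N f.
Local Notation R := skR.

Lemma forall_iter k : [forall x : 'I_N, iter k f x == x] <-> (forall x, x < N -> iter k f x = x).
Proof.
split.
  move=> /forallP H x Hx; exact: (eqP (H (Ordinal Hx))).
move=> H; apply/forallP => x; apply/eqP; exact: H.
Qed.

Lemma ord_spec : [/\ 0 < R, forall x, x < N -> iter R f x = x &
   forall k, 0 < k -> (forall x, x < N -> iter k f x = x) -> R <= k].
Proof.
have F0 : 0 < N`! by apply: fact_gt0.
have [h1 h2 /forall_iter h3] := @head_filter_iota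
  (fun k => [forall x : 'I_N, iter k f x == x]) 1 N`! N`! F0 ltac:(lia)
  (proj2 (forall_iter _) exists_fact).
split => //.
move=> k Hk Hid; case: (leqP k N`!) => Hkn; last by rewrite /skR /sk_ord; lia.
have [g1 g2 _] := @head_filter_iota
  (fun k => [forall x : 'I_N, iter k f x == x]) 1 N`! k Hk ltac:(lia)
  (proj2 (forall_iter _) Hid).
exact: g2.
Qed.

Lemma R_gt0 : 0 < R. Proof. by case: ord_spec. Qed.
Lemma iterR x : x < N -> iter R f x = x. Proof. by case: ord_spec => _ H _; apply: H. Qed.

Lemma iter_mulR q x : x < N -> iter (q * R) f x = x.
Proof.
move=> Hx; elim: q => [|q IH] //; by rewrite mulSn iterD IH iterR.
Qed.

Lemma iter_mod k x : x < N -> iter k f x = iter (k %% R) f x.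
Proof.
move=> Hx; rewrite {1}(divn_eq k R) addnC iterD iter_mulR //.
Qed.

Lemma ord_dvd k : (forall x, x < N -> iter k f x = x) -> R %| k.
Proof.
move=> H; rewrite /dvdn; apply/eqP.
case E: (k %% R) => [|j] //.
exfalso.
have : R <= j.+1.
  case: ord_spec => _ _; apply => // x Hx; by rewrite -E -iter_mod // H.
have := ltn_pmod k R_gt0; lia.
Qed.

Lemma iter_eq_mod i j : (forall x, x < N -> iter i f x = iter j f x) -> i = j %[mod R].
Proof.
wlog le : i j / i <= j.
  move=> W H; case: (leqP i j) => h; first by apply: W.
  symmetry; apply: W; [lia| by move=> x Hx; rewrite H].
move=> H; apply/eqP; rewrite eq_sym eqn_mod_dvd //; apply: ord_dvd => x Hx.
apply: (@iter_inj i) => //; first by apply: iter_lt.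
by rewrite -iterD subnKC // H.
Qed.

Lemma iter_congr i j x : x < N -> i = j %[mod R] -> iter i f x = iter j f x.
Proof. by move=> Hx E; rewrite iter_mod // E -iter_mod. Qed.

Lemma R1_id : R = 1 -> forall x, x < N -> f x = x.
Proof. move=> E x Hx; have := iterR Hx; by rewrite E. Qed.

Lemma id_R1 : (forall x, x < N -> f x = x) -> R = 1.
Proof.
move=> H; case: ord_spec => h1 _ h3; have := h3 1 isT H; lia.
Qed.
End Skew.


Section Skew2.
Variables (N : nat) (f : nat -> nat).
Hypothesis HN : 0 < N.
Hypothesis Hf : is_skew_morphism N f.
Local Notation R := (skR N f).

Lemma modDN y : y < N -> (y + N) %% N = y.
Proof. by move=> H; rewrite modnDr modn_small. Qed.

Lemma no_zero a : a < N -> (forall b, b < N -> f ((a+b) %% N) = (f a + b) %% N) ->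
  forall x, x < N -> f x = x.
Proof.
move=> Ha H.
have fa : f a = a.
  case: (posnP a) => [->|a0]; first by rewrite (f0 HN Hf).
  have := H (N - a) ltac:(lia).
  rewrite subnKC ?(ltnW Ha) // modnn (f0 HN Hf).
  have fl := f_lt HN Hf Ha.
  case: (ltnP (f a + (N - a)) N) => h; first by rewrite modn_small //; lia.
  rewrite -(subnK h) modnDr modn_small; lia.
move=> x Hx; case: (leqP a x) => h.
  have := H (x - a) ltac:(lia); rewrite subnKC // modn_small // fa subnKC //.
  by rewrite modn_small.
have := H (x + N - a) ltac:(lia).
rewrite fa; have -> : a + (x + N - a) = x + N by lia.
by rewrite modDN.
Qed.

Lemma pi_gen a : a < N -> R <> 1 -> exists i, 0 < i < R /\
  forall b, b < N -> f ((a+b) %% N) = (f a + iter i f b) %% N.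
Proof.
move=> Ha Rn1.
case: Hf => _ _ _ /(_ a Ha) [i Hi].
exists (i %% R); split; last first.
  by move=> b Hb; rewrite Hi // -iter_mod.
rewrite ltn_pmod ?R_gt0 // andbT lt0n; apply/eqP => E.
apply/Rn1/id_R1 => //; apply: (no_zero Ha) => b Hb.
by rewrite Hi // (iter_mod HN Hf) // E.
Qed.

Lemma pi_spec a : a < N -> forall b, b < N ->
  f ((a+b) %% N) = (f a + iter (sk_pi N f a) f b) %% N.
Proof.
move=> Ha b Hb; rewrite /sk_pi -/(skR N f).
case: eqP => [R1|Rn1].
  rewrite /= !(R1_id HN Hf) //; exact: ltn_pmod.
have [i [Hi1 Hi2]] := pi_gen Ha (fun E => Rn1 E).
have [h1 h2 /forallP h3] := @head_filter_iota
  (fun i => [forall b : 'I_N, f ((a + b) %% N) == (f a + iter i f b) %% N])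
  1 R.-1 i ltac:(lia) ltac:(lia) (introT forallP (fun b => introT eqP (Hi2 _ (ltn_ord b)))).
exact: (eqP (h3 (Ordinal Hb))).
Qed.

Lemma pi_range a : R != 1 -> a < N -> 0 < sk_pi N f a < R.
Proof.
move=> Rn1 Ha; rewrite /sk_pi -/(skR N f) (negbTE Rn1).
have [i [Hi1 Hi2]] := pi_gen Ha (fun E => (elimN eqP Rn1) E).
have [h1 h2 _] := @head_filter_iota
  (fun i => [forall b : 'I_N, f ((a + b) %% N) == (f a + iter i f b) %% N])
  1 R.-1 i ltac:(lia) ltac:(lia) (introT forallP (fun b => introT eqP (Hi2 _ (ltn_ord b)))).
lia.
Qed.

Lemma pi0 : sk_pi N f 0 = 1.
Proof.
rewrite /sk_pi -/(skR N f); case: eqP => // Rn1.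
have R2 : 1 < R by have := R_gt0 HN Hf; lia.
rewrite -(prednK (n := R.-1)) /=; last by lia.
suff -> : [forall b : 'I_N, f ((0 + b) %% N) == (f 0 + iter 1 f b) %% N] by [].
apply/forallP => b; rewrite add0n (f0 HN Hf) add0n /= !modn_small //; exact: f_lt.
Qed.

End Skew2.


Section Skew3.
Variables (N : nat) (f : nat -> nat).
Hypothesis HN : 0 < N.
Hypothesis Hf : is_skew_morphism N f.
Local Notation R := (skR N f).

Definition sig k a := \sum_(i < k) sk_pi N f (iter i f a).

Lemma F1 k a b : a < N -> b < N ->
  iter k f ((a+b) %% N) = (iter k f a + iter (sig k a) f b) %% N.
Proof.
move=> Ha Hb; elim: k => [|k IH]; first by rewrite /sig big_ord0.
rewrite iterS IH /sig big_ord_recr /=.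
rewrite (pi_spec HN Hf) ?(iter_lt HN Hf) // -iterD -/(sig k a).
by rewrite [_ + sig k a]addnC.
Qed.

Lemma sig_split k l a : sig (k + l) a = sig k a + sig l (iter k f a).
Proof.
rewrite /sig big_split_ord /=; congr (_ + _); apply: eq_bigr => i _.
by rewrite addnC iterD.
Qed.

Lemma sig_R a : a < N -> sig R a = 0 %[mod R].
Proof.
move=> Ha; apply: (iter_eq_mod HN Hf) => b Hb /=.
have := F1 R Ha Hb; rewrite !(iterR HN Hf) //; last by apply: ltn_pmod.
move/eqP; rewrite eqn_modDl => /eqP; rewrite !modn_small //; last by apply: (iter_lt HN Hf).
Qed.

Lemma sig_addR k a : a < N -> sig (R + k) a = sig k a %[mod R].
Proof.
move=> Ha; by rewrite sig_split (iterR HN Hf) // -modnDml (sig_R Ha) mod0n add0n.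
Qed.

Lemma sig_modk k a : a < N -> sig k a = sig (k %% R) a %[mod R].
Proof.
move=> Ha; rewrite {1}(divn_eq k R); elim: (k %/ R) => [|q IH] //.
by rewrite mulSn -addnA sig_addR.
Qed.

Lemma sig_congr k l a : a < N -> k = l %[mod R] -> sig k a = sig l a %[mod R].
Proof. by move=> Ha E; rewrite (sig_modk k Ha) E -(sig_modk l Ha). Qed.

Lemma sig_comp k a b : a < N -> b < N ->
  sig (sig k a) b = sig k ((a+b) %% N) %[mod R].
Proof.
move=> Ha Hb; apply: (iter_eq_mod HN Hf) => c Hc.
have Hab : (a + b) %% N < N by apply: ltn_pmod.
have Hbc : (b + c) %% N < N by apply: ltn_pmod.
have E1 := F1 k Hab Hc.
have E2 := F1 k Ha Hbc.
have E3 := F1 (sig k a) Hb Hc.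
have E4 := F1 k Ha Hb.
have Eq : ((a + b) %% N + c) %% N = (a + (b + c) %% N) %% N.
  by rewrite modnDml modnDmr addnA.
set A := iter k f a in E2 E4 *; set B := iter (sig k a) f b in E3 E4 *.
set Y := iter (sig k ((a + b) %% N)) f c in E1 *.
set Z := iter (sig (sig k a) b) f c in E3 *.
have : (A + B + Y) %% N = (A + B + Z) %% N.
  by rewrite -modnDml -E4 -E1 Eq E2 E3 modnDmr addnA.
move/eqP; rewrite -!addnA eqn_modDl eqn_modDl => /eqP.
rewrite !modn_small //; try by apply: (iter_lt HN Hf).
Qed.

Lemma sig0 k : sig k 0 = k.
Proof.
elim: k => [|k IH]; first by rewrite /sig big_ord0.
by rewrite /sig big_ord_recr /= -/(sig k 0) IH (iter0 HN Hf) (pi0 HN Hf) addn1.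
Qed.

Local Notation d := (sk_derived N f).

Lemma d_def k : d k = sig k (1 %% N) %% R.
Proof. by []. Qed.

Lemma d_lt k : d k < R.
Proof. exact: ltn_pmod (R_gt0 HN Hf). Qed.

Lemma iter_d j k : iter j d k = sig k (j %% N) %[mod R].
Proof.
elim: j => [|j IH]; first by rewrite /= mod0n sig0.
rewrite iterS d_def modn_mod.
have H1 : 1 %% N < N by apply: ltn_pmod.
have Hj : j %% N < N by apply: ltn_pmod.
rewrite (sig_congr H1 IH) (sig_comp k Hj H1) modnDm addn1 //.
Qed.

Lemma iter_d_lt j k : k < R -> iter j d k < R.
Proof. by move=> Hk; case: j => [|j] //; rewrite iterS; apply: d_lt. Qed.

Lemma dN k : k < R -> iter N d k = k.
Proof.
move=> Hk; have := iter_d N k; rewrite modnn sig0 (modn_small Hk) modn_small //.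
exact: iter_d_lt.
Qed.

Lemma pi_iter_d a : a < N -> sk_pi N f a = iter a d (1 %% R) %[mod R].
Proof.
move=> Ha; rewrite iter_d (modn_small Ha).
rewrite (@sig_congr (1 %% R) 1) ?modn_mod //.
by rewrite /sig big_ord1.
Qed.

Lemma d_skew_eq k l : l < R ->
  d ((k + l) %% R) = (d k + iter (iter k f (1 %% N)) d l) %% R.
Proof.
move=> Hl.
have H1 : 1 %% N < N by apply: ltn_pmod.
have Hi : iter k f (1 %% N) < N by apply: (iter_lt HN Hf).
rewrite !d_def (@sig_congr ((k + l) %% R) (k + l)) ?modn_mod //.
rewrite sig_split modnDml -[in RHS]modnDmr iter_d modnDmr (modn_small Hi) //.
Qed.

Lemma d_skew : is_skew_morphism R d.
Proof.
split.
- move=> x _; exact: d_lt.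
- move=> x y; rewrite !inE => Hx Hy E.
  have K z : iter N d z = iter N.-1 d (d z) by rewrite -iterSr prednK.
  by rewrite -(dN Hx) -(dN Hy) !K E.
- by rewrite d_def /sig big_ord0 mod0n.
- move=> a Ha; exists (iter a f (1 %% N)) => l Hl; exact: d_skew_eq.
Qed.

Lemma pi_d k : k < R -> sk_pi R d k = iter k f (1 %% N) %[mod sk_ord R d].
Proof.
move=> Hk.
have R0 := R_gt0 HN Hf.
apply: (iter_eq_mod R0 d_skew) => l Hl.
have E1 := pi_spec R0 d_skew Hk Hl.
rewrite d_skew_eq // in E1.
move/eqP: E1; rewrite eq_sym eqn_modDl => /eqP.
rewrite !(modn_small (iter_d_lt _ Hl)) //.
Qed.

Lemma ordd_dvd : sk_ord R d %| N.
Proof. exact: (ord_dvd (R_gt0 HN Hf) d_skew (fun x Hx => dN Hx)). Qed.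

End Skew3.

Lemma step N f (HN : 0 < N) (Hf : is_skew_morphism N f) k : k < skR N f ->
  iter k (sk_derived (sk_ord N f) (sk_derived N f)) (1 %% sk_ord (sk_ord N f) (sk_derived N f))
  = iter k f (1 %% N) %[mod sk_ord (sk_ord N f) (sk_derived N f)].
Proof.
move=> Hk.
have R0 := R_gt0 HN Hf.
rewrite -(pi_iter_d R0 (d_skew HN Hf) Hk).
exact: pi_d.
Qed.


Lemma chain_S N f i : sk_chain i.+1 N f =
  (sk_derived (sk_chain i N f).2 (sk_chain i N f).1, sk_ord (sk_chain i N f).2 (sk_chain i N f).1).
Proof. by []. Qed.

Lemma chain_ok N f (HN : 0 < N) (Hf : is_skew_morphism N f) i :
  0 < (sk_chain i N f).2 /\ is_skew_morphism (sk_chain i N f).2 (sk_chain i N f).1.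
Proof.
elim: i => [|i [IH1 IH2]] //.
rewrite chain_S /=; split; [exact: (R_gt0 IH1 IH2) | exact: (d_skew IH1 IH2)].
Qed.

Lemma inv_step N f (HN : 0 < N) (Hf : is_skew_morphism N f) m i :
  m %| (sk_chain i.+2 N f).2 ->
  (forall k, iter k (sk_chain i.+2 N f).1 (1 %% (sk_chain i.+2 N f).2) = 1 %[mod m]) ->
  m %| (sk_chain i N f).2 /\
  (forall k, iter k (sk_chain i N f).1 (1 %% (sk_chain i N f).2) = 1 %[mod m]).
Proof.
have [H0 Hs] := chain_ok HN Hf i.
rewrite !chain_S /=.
set g := (sk_chain i N f).1; set M := (sk_chain i N f).2 in H0 Hs *.
move=> Hdv Hit; split.
  exact: (dvdn_trans Hdv (ordd_dvd H0 Hs)).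
move=> k.
rewrite (iter_mod H0 Hs) ?ltn_pmod //.
have S := step H0 Hs (ltn_pmod k (R_gt0 H0 Hs)).
by rewrite -(modn_dvdm _ Hdv) -S (modn_dvdm _ Hdv) Hit.
Qed.

Theorem theorem4p4 (n : nat) (phi : nat -> nat) (c : nat) :
  2 <= n ->
  is_skew_morphism n phi ->
  sk_complexity n phi c -> odd c ->
  forall psi : nat -> nat,
    is_skew_morphism n psi ->
    (exists2 c' : nat, sk_complexity n psi c' & odd c') ->
    psi (1 %% n) = phi (1 %% n) ->
    sk_ord n psi = sk_ord n phi ->
    (forall a, a < sk_ord n phi -> sk_derived n psi a = sk_derived n phi a) ->
    (forall x, x < n ->
       iter (sk_auto_order n phi c) psi x = iter (sk_auto_order n phi c) phi x) ->
    forall x, x < n -> psi x = phi x.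
Proof.
move=> n2 Hphi [Hc Hc1] codd psi Hpsi _ H1 Hord Hder Hm.
have HN : 0 < n by lia.
set m := sk_auto_order n phi c in Hm.
have m2 : 2 <= m by [].
have base : m %| (sk_chain c n phi).2 /\
  (forall k, iter k (sk_chain c n phi).1 (1 %% (sk_chain c n phi).2) = 1 %[mod m]).
  split; first by rewrite dvdnn.
  have [Hc0 Hcs] := chain_ok HN Hphi c.
  rewrite chain_S /= in Hc1.
  have Hid := R1_id Hc0 Hcs Hc1.
  move=> k; have H1m : 1 %% m < m by apply: ltn_pmod; lia.
  have : iter k (sk_chain c n phi).1 (1 %% m) = 1 %% m.
    elim: k => [|k IH] //; by rewrite iterS IH Hid.
  by rewrite /m /sk_auto_order => ->; rewrite modn_mod.
have down : forall j, 2 * j <= c -> m %| (sk_chain (c - 2 * j) n phi).2 /\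
  (forall k, iter k (sk_chain (c - 2 * j) n phi).1 (1 %% (sk_chain (c - 2 * j) n phi).2) = 1 %[mod m]).
  elim => [|j IH] Hj; first by rewrite muln0 subn0.
  have [IH1 IH2] := IH ltac:(lia).
  have E : c - 2 * j = (c - 2 * j.+1).+2 by lia.
  rewrite E in IH1 IH2.
  exact: (@inv_step n phi HN Hphi m (c - 2 * j.+1) IH1 IH2).
have [L1a L1b] : m %| (sk_chain 1 n phi).2 /\
  (forall k, iter k (sk_chain 1 n phi).1 (1 %% (sk_chain 1 n phi).2) = 1 %[mod m]).
  have := odd_double_half c; rewrite codd -mul2n /= => E.
  have := down c./2 ltac:(lia).
  by have -> : c - 2 * c./2 = 1 by lia.
rewrite chain_S /= in L1a L1b.
set r := sk_ord n phi in L1a L1b Hord Hder.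
have r0 : 0 < r by apply: (R_gt0 HN Hphi).
have r2 : 2 <= r by have := dvdn_leq r0 L1a; lia.
have Rn1 : skR n phi != 1 by rewrite /skR -/r; apply/eqP; lia.
have Rn1' : skR n psi != 1 by rewrite /skR Hord; apply/eqP; lia.
have iterder : forall j y, y < r ->
    iter j (sk_derived n psi) y = iter j (sk_derived n phi) y.
  move=> j y Hy; elim: j => [|j IH] //; rewrite !iterS IH Hder //.
  exact: (iter_d_lt HN Hphi).
have pieq : forall a, a < n -> sk_pi n psi a = sk_pi n phi a.
  move=> a Ha.
  have P1 := pi_iter_d HN Hphi Ha.
  have P2 := pi_iter_d HN Hpsi Ha.
  rewrite /skR Hord -/r in P2; rewrite /skR -/r in P1.
  rewrite iterder in P2; last by apply: ltn_pmod.
  rewrite -P1 in P2.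
  have := pi_range HN Hphi Rn1 Ha; have := pi_range HN Hpsi Rn1' Ha.
  rewrite /skR Hord -/r => Q2 Q1.
  by move: P2; rewrite !modn_small //; lia.
have pim : forall a, a < n -> sk_pi n phi a %% m = 1.
  move=> a Ha.
  have P1 := pi_iter_d HN Hphi Ha; rewrite /skR -/r in P1.
  by rewrite -(modn_dvdm _ L1a) P1 (modn_dvdm _ L1a) L1b modn_small.
have itm : forall q y, y < n -> iter (q * m) psi y = iter (q * m) phi y.
  move=> q y Hy; elim: q => [|q IH] //.
  rewrite mulSn !iterD IH Hm //; exact: (iter_lt HN Hphi).
have itp : forall p, p %% m = 1 -> iter p psi 1 = iter p phi 1.
  move=> p Hp; rewrite (divn_eq p m) Hp addn1 !iterSr.
  have E1 : 1 %% n = 1 by rewrite modn_small.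
  rewrite -E1 H1 itm // E1; exact: (f_lt HN Hphi).
elim => [|x IH] Hx; first by rewrite (f0 HN Hpsi) (f0 HN Hphi).
have Ex : (x + 1) %% n = x.+1 by rewrite addn1 modn_small.
rewrite -Ex (pi_spec HN Hphi) ?(pi_spec HN Hpsi) //; try lia.
rewrite IH; last lia.
rewrite pieq; last lia.
by rewrite itp // pim //; lia.
Qed.
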